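(* Let $H$ be a binary Hamming code of length $n=2^k-1$ and let $\lambda:H\to\{0,1\}$ be a Boolean function with $\lambda(0^n)=0$ that is not linear. Let $V_H^\lambda=\{(x+y,\ |x|+\lambda(y),\ x)\mid x\in F^n,\ y\in H\}$. For $y'\in H$, the codeword $z=(y',\lambda(y'),0^n)$ belongs to $\mathrm{Tr}(V_H^\lambda)$ if and only if there exist $\pi\in \mathrm{Sym}(H)$ and $u\in F^n$ such that for all $y\in H$ $$\lambda(y')+\lambda(y)+\lambda(y'+\pi(y))=u\cdot y .$$
   Context: $F^n$ is the space of binary vectors of length $n$; $|x|=x_1+\dots+x_n\pmod 2$; $u\cdot y$ is the scalar product over $\mathbb{F}_2$. Permutations act on vectors by permuting coordinates. For a code $D\subseteq F^m$, $\mathrm{Sym}(D)=\{\pi\in S_m\mid \pi(D)=D\}$ and the translator is $\mathrm{Tr}(D)=\{z\in D\mid \exists \pi\in S_m:\ z+\pi(D)=D\}$. *)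

(* Defs.v *)
From mathcomp Require Import all_boot all_order all_algebra all_fingroup.
Set Implicit Arguments. Unset Strict Implicit. Unset Printing Implicit Defensive.
Import GRing.Theory.
Local Open Scope ring_scope.

Notation F2 := 'F_2.

Definition wt2 n (x : 'rV[F2]_n) : F2 := \sum_(i < n) x ord0 i.

Definition dot2 n (u y : 'rV[F2]_n) : F2 := \sum_(i < n) u ord0 i * y ord0 i.

Definition permv n (pi : {perm 'I_n}) (x : 'rV[F2]_n) : 'rV[F2]_n :=
  \row_(i < n) x ord0 ((pi^-1)%g i).

Definition permset n (pi : {perm 'I_n}) (D : {set 'rV[F2]_n}) : {set 'rV[F2]_n} :=
  [set permv pi d | d in D].

Definition in_Sym n (pi : {perm 'I_n}) (D : {set 'rV[F2]_n}) : Prop :=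
  permset pi D = D.

Definition in_Tr m (z : 'rV[F2]_m) (D : {set 'rV[F2]_m}) : Prop :=
  z \in D /\ exists pi : {perm 'I_m}, [set z + d | d in permset pi D] = D.

(* H is a binary Hamming code of length n = 2^k - 1: the kernel of a k x n
   parity-check matrix whose columns are pairwise distinct and nonzero
   (hence exactly all nonzero vectors of F^k). *)
Definition is_hamming_code (k n : nat) (H : {set 'rV[F2]_n}) : Prop :=
  n = (2 ^ k - 1)%N /\
  exists P : 'M[F2]_(k, n),
    (forall j, col j P != 0) /\ injective (fun j => col j P) /\
    H = [set x : 'rV[F2]_n | P *m x^T == 0].

Definition linear_on n (H : {set 'rV[F2]_n}) (lam : 'rV[F2]_n -> F2) : Prop :=
  forall y1 y2, y1 \in H -> y2 \in H -> lam (y1 + y2) = lam y1 + lam y2.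

Definition triple n (a : 'rV[F2]_n) (b : F2) (c : 'rV[F2]_n) : 'rV[F2]_(n + 1 + n) :=
  row_mx (row_mx a (b%:M)) c.

Definition VH n (H : {set 'rV[F2]_n}) (lam : 'rV[F2]_n -> F2) : {set 'rV[F2]_(n + 1 + n)} :=
  [set triple (x + y) (wt2 x + lam y) x | x in [set: 'rV[F2]_n], y in H].
Arguments is_hamming_code k n H : clear implicits.

(* Main.v *)
Require Import Defs.
From mathcomp Require Import all_boot all_order all_algebra all_fingroup.
From mathcomp Require Import zify.
Import GRing.Theory.
Local Open Scope ring_scope.
Set Implicit Arguments. Unset Strict Implicit.

Lemma F2K (a : 'F_2) : a + a = 0.
Proof. by case: a => [[|[|//]]] ?; apply/val_inj. Qed.
Lemma F2cases (a : 'F_2) : a = 0 \/ a = 1.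
Proof. by case: a => [[|[|//]]] ?; [left|right]; apply/val_inj. Qed.
Lemma F2opp (a : 'F_2) : - a = a.
Proof. by apply/eqP; rewrite eq_sym -subr_eq0 opprK F2K. Qed.
Lemma F2addI (a b : 'F_2) : a + b = 0 -> a = b.
Proof. by move=> h; rewrite -[b]add0r -h -addrA F2K addr0. Qed.

Section S.
Variable n : nat.
Definition iA (i : 'I_n) : 'I_(n+1+n) := lshift n (lshift 1 i).
Definition iM : 'I_(n+1+n) := lshift n (rshift n (ord0 : 'I_1)).
Definition iC (i : 'I_n) : 'I_(n+1+n) := rshift (n+1) i.

Lemma val_iA i : nat_of_ord (iA i) = nat_of_ord i. Proof. by []. Qed.
Lemma val_iM : nat_of_ord iM = n. Proof. by rewrite /= addn0. Qed.
Lemma val_iC i : nat_of_ord (iC i) = (n + 1 + nat_of_ord i)%N. Proof. by []. Qed.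

Lemma iA_inj : injective iA.
Proof. by move=> i j /(congr1 val) /= h; apply/val_inj. Qed.
Lemma iC_inj : injective iC.
Proof. by move=> i j /(congr1 (@nat_of_ord _)); rewrite !val_iC => /addnI h; apply/val_inj. Qed.
Lemma iAM i : iA i <> iM.
Proof. move/(congr1 (@nat_of_ord _)); rewrite val_iA val_iM; have := ltn_ord i. lia. Qed.
Lemma iAC i j : iA i <> iC j.
Proof. move/(congr1 (@nat_of_ord _)); rewrite val_iA val_iC; have := ltn_ord i; lia. Qed.
Lemma iMC j : iM <> iC j.
Proof. move/(congr1 (@nat_of_ord _)); rewrite val_iM val_iC; lia. Qed.

Lemma idx_cases (t : 'I_(n+1+n)) :
  (exists i, t = iA i) \/ t = iM \/ (exists i, t = iC i).
Proof.
case: (ltnP (nat_of_ord t) n) => h1.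
  by left; exists (Ordinal h1); apply: ord_inj.
case: (eqVneq (nat_of_ord t) n) => h2.
  by right; left; apply: ord_inj; rewrite val_iM.
right; right.
have h3 : (nat_of_ord t - (n+1) < n)%N by have := ltn_ord t; lia.
exists (Ordinal h3); apply: ord_inj; rewrite val_iC /=; lia.
Qed.

Lemma tripleA (a : 'rV['F_2]_n) (b : 'F_2) (c : 'rV['F_2]_n) i : triple a b c ord0 (iA i) = a ord0 i.
Proof. by rewrite /triple /iA !row_mxEl. Qed.
Lemma tripleM (a : 'rV['F_2]_n) (b : 'F_2) (c : 'rV['F_2]_n) : triple a b c ord0 iM = b.
Proof. by rewrite /triple /iM row_mxEl row_mxEr mxE. Qed.
Lemma tripleC (a : 'rV['F_2]_n) (b : 'F_2) (c : 'rV['F_2]_n) i : triple a b c ord0 (iC i) = c ord0 i.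
Proof. by rewrite /triple /iC row_mxEr. Qed.

Lemma triple_dec (w : 'rV['F_2]_(n+1+n)) :
  w = triple (\row_i w ord0 (iA i)) (w ord0 iM) (\row_i w ord0 (iC i)).
Proof.
apply/rowP => t; case: (idx_cases t) => [[i ->]|[->|[i ->]]].
- by rewrite tripleA mxE.
- by rewrite tripleM.
- by rewrite tripleC mxE.
Qed.

Lemma triple_inj (a c a' c' : 'rV['F_2]_n) (b b' : 'F_2) : triple a b c = triple a' b' c' ->
  [/\ a = a', b = b' & c = c'].
Proof.
move=> h; split.
- by apply/rowP => i; rewrite -(tripleA a b c) -(tripleA a' b' c') h.
- by rewrite -(tripleM a b c) -(tripleM a' b' c') h.
- by apply/rowP => i; rewrite -(tripleC a b c) -(tripleC a' b' c') h.
Qed.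

Lemma dot2_triple (p q a d : 'rV['F_2]_n) (b c : 'F_2) :
  dot2 (triple p b q) (triple a c d) = dot2 p a + b * c + dot2 q d.
Proof.
rewrite /dot2 big_split_ord big_split_ord big_ord1 /=.
congr (_ + _ + _).
- by apply: eq_bigr => i _; rewrite (tripleA p b q i) (tripleA a c d i).
- by rewrite (tripleM p b q) (tripleM a c d).
- by apply: eq_bigr => i _; rewrite (tripleC p b q i) (tripleC a c d i).
Qed.
End S.

Lemma F2K' n (x : 'rV['F_2]_n) : x + x = 0.
Proof. by apply/rowP => i; rewrite !mxE F2K. Qed.

Lemma dot2D n (u a b : 'rV['F_2]_n) : dot2 u (a + b) = dot2 u a + dot2 u b.
Proof. by rewrite /dot2 -big_split; apply: eq_bigr => i _; rewrite mxE mulrDr. Qed.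
Lemma dot2Dl n (u v a : 'rV['F_2]_n) : dot2 (u + v) a = dot2 u a + dot2 v a.
Proof. by rewrite /dot2 -big_split; apply: eq_bigr => i _; rewrite mxE mulrDl. Qed.
Lemma dot2_delta n (p : 'rV['F_2]_n) i : dot2 p (delta_mx 0 i) = p ord0 i.
Proof.
rewrite /dot2 (bigD1 i) //= big1 ?addr0; first by rewrite mxE !eqxx mulr1.
by move=> j /negPf hj; rewrite mxE hj andbF mulr0.
Qed.
Lemma wt2_delta n (i : 'I_n) : wt2 (delta_mx 0 i) = 1.
Proof.
rewrite /wt2 (bigD1 i) //= big1 ?addr0; first by rewrite mxE !eqxx.
by move=> j /negPf hj; rewrite mxE hj andbF.
Qed.
Lemma wt20 n : wt2 (0 : 'rV['F_2]_n) = 0.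
Proof. by rewrite /wt2 big1 // => i _; rewrite mxE. Qed.

Lemma permvE n (s : {perm 'I_n}) v t : permv s v ord0 (s t) = v ord0 t.
Proof. by rewrite /permv mxE permK. Qed.
Lemma permvD n (s : {perm 'I_n}) a b : permv s (a + b) = permv s a + permv s b.
Proof. by apply/rowP => i; rewrite !mxE. Qed.
Lemma permv_inj n (s : {perm 'I_n}) : injective (permv s).
Proof.
move=> a b h; apply/rowP => i; by rewrite -(permvE s a) -(permvE s b) h.
Qed.
Lemma dot2_permv n (s : {perm 'I_n}) w v : dot2 (permv s w) (permv s v) = dot2 w v.
Proof.
rewrite /dot2 (reindex_inj (@perm_inj _ s)) /=.
by apply: eq_bigr => i _; rewrite !permvE.
Qed.

Lemma memV n (H : {set 'rV['F_2]_n}) lam a b c :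
  (triple a b c \in VH H lam) <-> (a + c \in H /\ b = wt2 c + lam (a + c)).
Proof.
split.
  case/imset2P => x y _ hy /triple_inj [-> -> ->].
  by rewrite [x + y]addrC -addrA F2K' addr0; split.
move=> [hH hb]; apply/imset2P; exists c (a + c) => //.
by rewrite hb addrCA F2K' addr0.
Qed.

Lemma dot20 n (u : 'rV['F_2]_n) : dot2 u 0 = 0.
Proof. by rewrite /dot2 big1 // => i _; rewrite mxE mulr0. Qed.

Definition perpH n (H : {set 'rV['F_2]_n}) (p : 'rV['F_2]_n) :=
  forall y, y \in H -> dot2 p y = 0.

Lemma ham_facts k n H : is_hamming_code k n H ->
  [/\ (0 : 'rV['F_2]_n) \in H,
      (forall y1 y2, y1 \in H -> y2 \in H -> y1 + y2 \in H),
      (forall i : 'I_n, exists p, perpH H p /\ p ord0 i = 1) &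
      (forall i j : 'I_n, i != j -> exists p, perpH H p /\ p ord0 i != p ord0 j)].
Proof.
case=> _ [P [hc [hinj ->]]].
have hrow r y : y \in [set x : 'rV['F_2]_n | P *m x^T == 0] -> dot2 (row r P) y = 0.
  rewrite inE => /eqP /matrixP /(_ r ord0); rewrite !mxE => <-.
  by apply: eq_bigr => j _; rewrite !mxE.
split.
- by rewrite inE trmx0 mulmx0.
- by move=> y1 y2; rewrite !inE linearD /= mulmxDr => /eqP -> /eqP ->; rewrite addr0.
- move=> i; have := hc i; case/matrix0Pn => r [z]; rewrite ord1 !mxE => hr.
  exists (row r P); split; first by move=> y; apply: hrow.
  by rewrite mxE; case: (F2cases (P r i)) hr => ->.
- move=> i j hij; have : col i P != col j P.
    by apply/eqP => /hinj /eqP; rewrite (negPf hij).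
  rewrite -subr_eq0; case/matrix0Pn => r [z]; rewrite ord1 !mxE subr_eq0 => hr.
  exists (row r P); split; first by move=> y; apply: hrow.
  by rewrite !mxE.
Qed.

Lemma perp_triple n (H : {set 'rV['F_2]_n}) lam p : perpH H p ->
  forall v, v \in VH H lam -> dot2 (triple p 0 p) v = 0.
Proof.
move=> hp v; rewrite (triple_dec v) => /memV [hac _].
by rewrite dot2_triple mul0r addr0 -dot2D hp.
Qed.

Lemma perpV_struct n (H : {set 'rV['F_2]_n}) lam
  (h0 : 0 \in H) (hcl : forall y1 y2, y1 \in H -> y2 \in H -> y1 + y2 \in H)
  (hlam0 : lam 0 = 0) (hnl : ~ linear_on H lam) (w : 'rV['F_2]_(n+1+n)) :
  (forall v, v \in VH H lam -> dot2 w v = 0) ->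
  w ord0 (iM n) = 0 /\ forall i, w ord0 (iA i) = w ord0 (iC i).
Proof.
move=> hw.
set p := \row_i w ord0 (iA i); set b := w ord0 (iM n); set q := \row_i w ord0 (iC i).
have ew : w = triple p b q by rewrite /p /b /q -triple_dec.
have hy y : y \in H -> dot2 p y + b * lam y = 0.
  move=> yH; have := hw (triple y (lam y) 0).
  rewrite ew dot2_triple dot20 addr0; apply; apply/memV.
  by rewrite addr0 wt20 add0r.
have hx x : dot2 p x + b * wt2 x + dot2 q x = 0.
  have := hw (triple x (wt2 x) x); rewrite ew dot2_triple; apply; apply/memV.
  by rewrite F2K' hlam0 addr0.
have hb : b = 0.
  case: (F2cases b) => // hb1; exfalso; apply: hnl => y1 y2 h1 h2.
  have e y : y \in H -> lam y = dot2 p y.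
    by move=> yH; have := hy y yH; rewrite hb1 mul1r => /F2addI.
  by rewrite !e ?dot2D //; apply: hcl.
split => // i.
have := hx (delta_mx 0 i); rewrite hb mul0r addr0 !dot2_delta !mxE => /F2addI.
by [].
Qed.

Definition Dm n (H : {set 'rV['F_2]_n}) lam (w : 'rV['F_2]_(n+1+n)) :=
  forall v, v \in VH H lam -> dot2 w v = 0.

Definition blk n (i : 'I_n) (x : 'I_(n+1+n)) := x = iA i \/ x = iC i.

Lemma wblk n (p : 'rV['F_2]_n) i x : blk i x -> triple p 0 p ord0 x = p ord0 i.
Proof. by case=> ->; rewrite ?tripleA ?tripleC. Qed.

Lemma nopair n (H : {set 'rV['F_2]_n}) lam (s : {perm 'I_(n+1+n)})
  (hsep : forall i j : 'I_n, i != j -> exists p, perpH H p /\ p ord0 i != p ord0 j)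
  (hD : forall w, Dm H lam w -> Dm H lam (permv s w))
  i i' x x' : i != i' -> blk i x -> blk i' x' ->
  (forall w, Dm H lam w -> w ord0 (s x) = w ord0 (s x')) -> False.
Proof.
move=> hii bx bx' hp.
have [p [hpH hne]] := hsep _ _ hii.
have := hp _ (hD _ (@perp_triple _ _ lam _ hpH)).
by rewrite !permvE (wblk _ bx) (wblk _ bx') => /eqP; rewrite (negPf hne).
Qed.

Lemma sigma_struct n (H : {set 'rV['F_2]_n}) lam (s : {perm 'I_(n+1+n)})
  (hnz : forall i : 'I_n, exists p, perpH H p /\ p ord0 i = 1)
  (hsep : forall i j : 'I_n, i != j -> exists p, perpH H p /\ p ord0 i != p ord0 j)
  (hstr : forall w, Dm H lam w -> w ord0 (iM n) = 0 /\ forall i, w ord0 (iA i) = w ord0 (iC i))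
  (hD : forall w, Dm H lam w -> Dm H lam (permv s w)) :
  s (iM n) = iM n /\
  forall i, exists j, (s (iA i) = iA j /\ s (iC i) = iC j) \/
                      (s (iA i) = iC j /\ s (iC i) = iA j).
Proof.
have hM : s (iM n) = iM n.
  have bl x : x != iM n -> exists i, blk i x.
    case: (idx_cases x) => [[i ->]|[->|[i ->]]]; first by exists i; left.
      by rewrite eqxx.
    by exists i; right.
  case: (eqVneq ((s^-1)%g (iM n)) (iM n)) => h.
    by rewrite -{1}h permKV.
  have [i bi] := bl _ h.
  have [p [hpH hp1]] := hnz i.
  have [h0 _] := hstr _ (hD _ (@perp_triple _ _ lam _ hpH)).
  move: h0; rewrite -{1}(permKV s (iM n)) permvE (wblk _ bi) hp1 => /eqP.
  by rewrite oner_eq0.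
split => // i.
have pAC w j : Dm H lam w -> w ord0 (iA j) = w ord0 (iC j) by move=> /hstr [_ ->].
have pCA w j : Dm H lam w -> w ord0 (iC j) = w ord0 (iA j) by move=> /hstr [_ ->].
case: (idx_cases (s (iA i))) => [[j hj]|[hj|[j hj]]].
- exists j; left; split => //.
  set r := (s^-1)%g (iC j).
  have hr : s r = iC j by rewrite permKV.
  case: (idx_cases r) => [[i' ei]|[ei|[i' ei]]].
  + exfalso; case: (eqVneq i i') => hii.
      by move: hr; rewrite ei -hii hj => /iAC.
    apply: (nopair hsep hD (x := iA i) (x' := r) hii); [by left|by left|].
    by move=> w; rewrite hj hr; apply: pAC.
  + by move: hr; rewrite ei hM => /iMC.
  + case: (eqVneq i i') => hii; first by rewrite -hr ei hii.
    exfalso; apply: (nopair hsep hD (x := iA i) (x' := r) hii); [by left|by right|].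
    by move=> w; rewrite hj hr; apply: pAC.
- by exfalso; move: hj; rewrite -hM => /perm_inj /iAM.
- exists j; right; split => //.
  set r := (s^-1)%g (iA j).
  have hr : s r = iA j by rewrite permKV.
  case: (idx_cases r) => [[i' ei]|[ei|[i' ei]]].
  + exfalso; case: (eqVneq i i') => hii.
      by move: hr; rewrite ei -hii hj => /esym /iAC.
    apply: (nopair hsep hD (x := iA i) (x' := r) hii); [by left|by left|].
    by move=> w; rewrite hj hr; apply: pCA.
  + by move: hr; rewrite ei hM => /esym /iAM.
  + case: (eqVneq i i') => hii; first by rewrite -hr ei hii.
    exfalso; apply: (nopair hsep hD (x := iA i) (x' := r) hii); [by left|by right|].
    by move=> w; rewrite hj hr; apply: pCA.
Qed.

Lemma triple0 n : triple (0 : 'rV['F_2]_n) 0 0 = 0.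
Proof.
apply/rowP => t; case: (idx_cases t) => [[i ->]|[->|[i ->]]];
  by rewrite ?tripleA ?tripleM ?tripleC !mxE.
Qed.

Lemma F2vaddI n (a b : 'rV['F_2]_n) : a + b = 0 -> a = b.
Proof. by move=> h; rewrite -[b]add0r -h -addrA F2K' addr0. Qed.

Definition bidx n (d : 'I_n) (t : 'I_(n+1+n)) : 'I_n :=
  insubd d (if (nat_of_ord t < n)%N then nat_of_ord t else (nat_of_ord t - (n+1))%N).

Lemma bidxA n (d : 'I_n) j : bidx d (iA j) = j.
Proof. by apply: val_inj; rewrite /bidx val_insubd val_iA ltn_ord ltn_ord. Qed.
Lemma bidxC n (d : 'I_n) j : bidx d (iC j) = j.
Proof.
apply: val_inj; rewrite /bidx val_insubd val_iC.
have h1 : (n + 1 + j < n)%N = false by apply/negbTE; rewrite -leqNgt; lia.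
by rewrite h1 (_ : (n + 1 + j - (n + 1) = j)%N) ?ltn_ord //; lia.
Qed.

Lemma rowE' n (F : 'I_n -> 'F_2) j : (\row_(i<n) F i) ord0 j = F j.
Proof. by rewrite mxE. Qed.
Lemma addE' n (a b : 'rV['F_2]_n) t : (a + b) ord0 t = a ord0 t + b ord0 t.
Proof. by rewrite mxE. Qed.
Lemma zeroE n t : (0 : 'rV['F_2]_n) ord0 t = 0.
Proof. by rewrite mxE. Qed.

Lemma forward k n (H : {set 'rV['F_2]_n}) lam (hH : is_hamming_code k n H)
  (hlam0 : lam 0 = 0) (hnl : ~ linear_on H lam) y' (hy' : y' \in H)
  (s : {perm 'I_(n+1+n)})
  (hs : [set triple y' (lam y') 0 + d | d in permset s (VH H lam)] = VH H lam) :
  exists (pi : {perm 'I_n}) (u : 'rV['F_2]_n),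
    in_Sym pi H /\
    forall y, y \in H -> lam y' + lam y + lam (y' + permv pi y) = dot2 u y.
Proof.
have [h0 hcl hnz hsep] := ham_facts hH.
set z := triple y' (lam y') 0.
have inV v : v \in VH H lam -> exists2 v1, v1 \in VH H lam & v = z + permv s v1.
  rewrite -{1}hs => /imsetP [d /imsetP [v1 hv1 ->] ->]; by exists v1.
have V0 : (0 : 'rV['F_2]_(n+1+n)) \in VH H lam.
  by rewrite -triple0; apply/memV; rewrite addr0 wt20 hlam0 addr0.
have [v0 hv0 e0] := inV _ V0.
have ez : permv s v0 = z by apply/esym/F2vaddI; rewrite -e0.
have hD : forall w, Dm H lam w -> Dm H lam (permv s w).
  move=> w hw v /inV [v1 hv1 ->].
  by rewrite -ez -permvD dot2_permv dot2D !hw ?addr0.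
have hstr := @perpV_struct n H lam h0 hcl hlam0 hnl.
have [hM hpair] := sigma_struct hnz hsep hstr hD.
pose f i := bidx i (s (iA i)).
have hf i : (s (iA i) = iA (f i) /\ s (iC i) = iC (f i)) \/
            (s (iA i) = iC (f i) /\ s (iC i) = iA (f i)).
  have [j [[h1 h2]|[h1 h2]]] := hpair i.
    by left; rewrite /f h1 bidxA h2.
  by right; rewrite /f h1 bidxC h2.
have finj : injective f.
  move=> i1 i2 e.
  case: (hf i1) => [[a1 c1]|[a1 c1]]; case: (hf i2) => [[a2 c2]|[a2 c2]];
    rewrite -e in a2 c2.
  - by apply/iA_inj/(@perm_inj _ s); rewrite a1 a2.
  - by move: a2; rewrite -c1 => /perm_inj /iAC.
  - by move: a2; rewrite -c1 => /perm_inj /iAC.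
  - by apply/iA_inj/(@perm_inj _ s); rewrite a1 a2.
pose pi := perm finj.
pose u := \row_i (if s (iA i) == iC (f i) then (1 : 'F_2) else 0).
have key y : y \in H ->
  y' + permv pi y \in H /\ lam y' + lam y = dot2 u y + lam (y' + permv pi y).
  move=> yH.
  set v := triple y (lam y) 0.
  have hv : v \in VH H lam by apply/memV; rewrite addr0 wt20 add0r.
  have : z + permv s v \in VH H lam by rewrite -hs; apply/imsetP; exists (permv s v) => //;
    apply/imsetP; exists v.
  rewrite (triple_dec (z + permv s v)) => /memV [hac hb].
  set a := \row_i _ in hac hb; set c := \row_i _ in hac hb.
  have ha j : a ord0 j = z ord0 (iA j) + permv s v ord0 (iA j) by rewrite mxE addE'.
  have hc j : c ord0 j = z ord0 (iC j) + permv s v ord0 (iC j) by rewrite mxE addE'.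
  have eac : a + c = y' + permv pi y.
    apply/rowP => j; rewrite -(permKV pi j); set i := (pi^-1)%g j.
    rewrite addE' ha hc permE /z tripleA tripleC zeroE add0r [RHS]mxE -addrA; congr (_ + _).
    rewrite (_ : permv pi y ord0 (f i) = y ord0 i); last by rewrite -(permvE pi y i) permE.
    case: (hf i) => [[h1 h2]|[h1 h2]]; rewrite -h1 -h2 !permvE /v tripleA tripleC zeroE.
      by rewrite addr0.
    by rewrite add0r.
  have ec : wt2 c = dot2 u y.
    rewrite /wt2 /dot2 (reindex_inj (@perm_inj _ pi)) /=.
    apply: eq_bigr => i _; rewrite hc /u rowE' permE /z tripleC zeroE add0r.
    case: (hf i) => [[h1 h2]|[h1 h2]].
      rewrite h1 (_ : (iA (f i) == iC (f i)) = false) ?mul0r; last by apply/eqP/iAC.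
      by rewrite -h2 permvE /v tripleC zeroE.
    by rewrite h1 eqxx mul1r -h1 permvE /v tripleA.
  rewrite -eac; split => //.
  move: hb; rewrite ec addE' /z tripleM -hM permvE /v tripleM => ->.
  done.
exists pi, u; split.
  apply/eqP; rewrite eqEcard card_imset; last exact: permv_inj.
  rewrite leqnn andbT; apply/subsetP => _ /imsetP [y yH ->].
  have [h _] := key y yH.
  have -> : permv pi y = y' + (y' + permv pi y) by rewrite addrA F2K' add0r.
  exact: hcl.
move=> y yH; have [_ ->] := key y yH.
by rewrite -addrA F2K addr0.
Qed.

Definition G n (p : {perm 'I_n}) (w : 'I_n -> bool) (t : 'I_(n+1+n)) : 'I_(n+1+n) :=
  match split t with
  | inl t1 => match split t1 with
              | inl i => if w i then iC (p i) else iA (p i)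
              | inr _ => iM n end
  | inr i => if w i then iA (p i) else iC (p i)
  end.

Lemma GA n p w (i : 'I_n) : G p w (iA i) = if w i then iC (p i) else iA (p i).
Proof.
rewrite /G /iA (_ : lshift n (lshift 1 i) = unsplit (inl (lshift 1 i))) // unsplitK.
by rewrite (_ : lshift 1 i = unsplit (inl i)) // unsplitK.
Qed.
Lemma GM n p w : G p w (iM n) = iM n.
Proof.
rewrite /G /iM (_ : lshift n (rshift n ord0) = unsplit (inl (rshift n ord0))) // unsplitK.
by rewrite (_ : rshift n ord0 = unsplit (inr ord0)) // unsplitK.
Qed.
Lemma GC n p w (i : 'I_n) : G p w (iC i) = if w i then iA (p i) else iC (p i).
Proof.
by rewrite /G /iC (_ : rshift (n+1) i = unsplit (inr i)) // unsplitK.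
Qed.

Lemma G_can n (p : {perm 'I_n}) (w : 'I_n -> bool) :
  cancel (G p w) (G (p^-1)%g (fun j => w ((p^-1)%g j))).
Proof.
move=> t; case: (idx_cases t) => [[i ->]|[->|[i ->]]].
- by rewrite GA; case: ifP => hw; rewrite ?GA ?GC permK hw.
- by rewrite !GM.
- by rewrite GC; case: ifP => hw; rewrite ?GA ?GC permK hw.
Qed.

Lemma F2alg (A B C D E : 'F_2) : A + B + C = D -> A + E + B = E + D + C.
Proof.
move=> <-.
by case: (F2cases A) => ->; case: (F2cases B) => ->; case: (F2cases C) => ->;
  case: (F2cases E) => ->; apply/eqP.
Qed.

Lemma backward k n (H : {set 'rV['F_2]_n}) lam (hH : is_hamming_code k n H)
  (hlam0 : lam 0 = 0) y' (hy' : y' \in H) (pi : {perm 'I_n}) (u : 'rV['F_2]_n)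
  (hpi : in_Sym pi H)
  (hid : forall y, y \in H -> lam y' + lam y + lam (y' + permv pi y) = dot2 u y) :
  in_Tr (triple y' (lam y') 0) (VH H lam).
Proof.
have [h0 hcl _ _] := ham_facts hH.
set z := triple y' (lam y') 0.
have zV : z \in VH H lam by apply/memV; rewrite addr0 wt20 add0r.
split => //.
pose w i := u ord0 i == 1.
pose s := perm (can_inj (G_can pi w)).
have sE t : s t = G pi w t by rewrite permE.
exists s.
apply/eqP; rewrite eqEcard; apply/andP; split; last first.
  rewrite card_imset; last exact: addrI.
  by rewrite card_imset //; exact: permv_inj.
apply/subsetP => _ /imsetP [_ /imsetP [v hv ->] ->].
have hv' := hv; rewrite (triple_dec v) in hv'; case/memV: hv' => hac hb.
set a := \row_i _ in hac hb; set c := \row_i _ in hac hb.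
set y := a + c in hac hb.
have pyH : permv pi y \in H by rewrite -hpi; apply/imsetP; exists y.
have vA i : v ord0 (iA i) = a ord0 i by rewrite mxE.
have vC i : v ord0 (iC i) = c ord0 i by rewrite mxE.
have sA i : s (iA i) = if w i then iC (pi i) else iA (pi i) by rewrite sE GA.
have sC i : s (iC i) = if w i then iA (pi i) else iC (pi i) by rewrite sE GC.
have sM : s (iM n) = iM n by rewrite sE GM.
set x := z + permv s v.
have xA i : x ord0 (iA (pi i)) = y' ord0 (pi i) + (if w i then c ord0 i else a ord0 i).
  rewrite addE' /z tripleA; congr (_ + _).
  case: ifP => hw.
    by have := sC i; rewrite hw => <-; rewrite permvE vC.
  by have := sA i; rewrite hw => <-; rewrite permvE vA.
have xC i : x ord0 (iC (pi i)) = (if w i then a ord0 i else c ord0 i).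
  rewrite addE' /z tripleC zeroE add0r.
  case: ifP => hw.
    by have := sA i; rewrite hw => <-; rewrite permvE vA.
  by have := sC i; rewrite hw => <-; rewrite permvE vC.
rewrite (triple_dec x); apply/memV.
set a2 := \row_i _; set c2 := \row_i _.
have e2 : a2 + c2 = y' + permv pi y.
  apply/rowP => j; rewrite -(permKV pi j); set i := (pi^-1)%g j.
  rewrite addE' !rowE' xA xC [RHS]mxE permvE -addrA; congr (_ + _).
  by rewrite /y addE'; case: (w i) => //; rewrite addrC.
rewrite e2; split; first exact: hcl.
have ew : wt2 c2 = wt2 c + dot2 u y.
  rewrite /wt2 /dot2 -big_split /= (reindex_inj (@perm_inj _ pi)) /=.
  apply: eq_bigr => i _; rewrite rowE' xC /y addE' /w.
  case: ifP => [/eqP -> | /negbT hu].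
    by rewrite mul1r addrA (addrC (c ord0 i)) -addrA F2K addr0.
  have -> : u ord0 i = 0 by case: (F2cases (u ord0 i)) hu => ->.
  by rewrite mul0r addr0.
rewrite ew addE' /z tripleM -sM permvE hb.
by rewrite addrA; apply: F2alg; apply: hid.
Qed.

Unset Implicit Arguments.
Set Strict Implicit.
Theorem corollary1 (k n : nat) (H : {set 'rV['F_2]_n}) (lam : 'rV['F_2]_n -> 'F_2)
  (hH : is_hamming_code k n H) (hlam0 : lam 0 = 0) (hnl : ~ @linear_on n H lam)
  (y' : 'rV['F_2]_n) (hy' : y' \in H) :
  in_Tr (triple y' (lam y') 0) (VH H lam) <->
  exists (pi : {perm 'I_n}) (u : 'rV['F_2]_n),
    in_Sym pi H /\
    forall y, y \in H -> lam y' + lam y + lam (y' + permv pi y) = dot2 u y.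
Proof.
split.
  by case=> _ [s hs]; exact: (forward hH hlam0 hnl hy' hs).
by case=> pi [u [hpi hid]]; exact: (backward hH hlam0 hy' hpi hid).
Qed.
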